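(* Let $\{M^A_\alpha\}_{\alpha=1}^{d_A^2}$ be a GSICPOVM on $\mathbb{C}^{d_A}$ with parameter $a_A$ and $\{M^B_\beta\}_{\beta=1}^{d_B^2}$ a GSICPOVM on $\mathbb{C}^{d_B}$ with parameter $a_B$. Let $\mu,\nu\in\mathbb{R}$ and $l$ a positive integer. If a state $\rho_{AB}$ on $\mathbb{C}^{d_A}\otimes\mathbb{C}^{d_B}$ is separable, then $$\left\|\mathcal{M}^l_{\mu,\nu}(\rho_{AB})\right\|_{\mathrm{tr}}\le\sqrt{\left(l\mu^2+\frac{a_Ad_A^2+1}{d_A(d_A+1)}\right)\left(l\nu^2+\frac{a_Bd_B^2+1}{d_B(d_B+1)}\right)},$$ where $$\mathcal{M}^l_{\mu,\nu}(\rho_{AB})=\begin{pmatrix}\mu\nu J_{l\times l}&\mu\,\omega_l(\zeta)^T\\ \nu\,\omega_l(\varsigma)&\mathcal{G}(\rho_{AB})\end{pmatrix}.$$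
   Context: A GSICPOVM (general symmetric informationally complete POVM) on $\mathbb{C}^d$ is a POVM of $d^2$ positive semidefinite operators $\{M_k\}_{k=1}^{d^2}$ summing to $I_d$ with $\mathrm{tr}(M_k)=1/d$, $\mathrm{tr}(M_k^2)=a$, $\mathrm{tr}(M_kM_l)=\frac{1-da}{d(d^2-1)}$ for $l\ne k$, where $\frac1{d^3}<a\le\frac1{d^2}$. A state is separable if it is a convex combination of product states $\rho_A^i\otimes\rho_B^i$. $\rho_A,\rho_B$ are the reduced states. $\varsigma\in\mathbb{R}^{d_A^2}$ has entries $\mathrm{tr}(M^A_\alpha\rho_A)$, $\zeta\in\mathbb{R}^{d_B^2}$ has entries $\mathrm{tr}(M^B_\beta\rho_B)$, and $\mathcal{G}(\rho_{AB})$ is the $d_A^2\times d_B^2$ matrix with entries $\mathrm{tr}[(M^A_\alpha\otimes M^B_\beta)\rho_{AB}]$ (row $\alpha$, column $\beta$). $J_{l\times l}$ is the $l\times l$ all-ones matrix; for a column vector $X$, $\omega_l(X)=(X,\dots,X)$ is the matrix with $l$ columns equal to $X$. $\|G\|_{\mathrm{tr}}=\mathrm{tr}\sqrt{G^\dagger G}$. *)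

(* Defs.v *)
(* Complex numbers: an arbitrary numClosedFieldType C
   (e.g. complex R for a real closed field R, or algC). *)
From HB Require Import structures.
From mathcomp Require Import all_boot all_order all_algebra.
From mathcomp Require Import sesquilinear spectral.
Set Implicit Arguments. Unset Strict Implicit. Unset Printing Implicit Defensive.
Import Order.TTheory GRing.Theory Num.Theory Num.Def.
Local Open Scope ring_scope.

Section Defs.
Variable C : numClosedFieldType.

Definition adjmx m n (A : 'M[C]_(m, n)) : 'M[C]_(n, m) := map_mx conjC (A^T).

Definition psd n (A : 'M[C]_n) : Prop :=
  adjmx A = A /\ forall v : 'rV[C]_n, 0 <= (v *m A *m adjmx v) 0 0.

Definition is_state n (rho : 'M[C]_n) : Prop := psd rho /\ \tr rho = 1.

(* splitting of an index of C^m (x) C^n, consistent with mxvec_index *)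
Definition idxA m n (k : 'I_(m * n)) : 'I_m :=
  (enum_val (cast_ord (esym (mxvec_cast m n)) k)).1.
Definition idxB m n (k : 'I_(m * n)) : 'I_n :=
  (enum_val (cast_ord (esym (mxvec_cast m n)) k)).2.

Definition tensmx m n (A : 'M[C]_m) (B : 'M[C]_n) : 'M[C]_(m * n) :=
  \matrix_(i, j) (A (idxA i) (idxA j) * B (idxB i) (idxB j)).

Definition ptraceB m n (rho : 'M[C]_(m * n)) : 'M[C]_m :=
  \matrix_(i, j) \sum_(k < n) rho (mxvec_index i k) (mxvec_index j k).
Definition ptraceA m n (rho : 'M[C]_(m * n)) : 'M[C]_n :=
  \matrix_(i, j) \sum_(k < m) rho (mxvec_index k i) (mxvec_index k j).

Definition separable m n (rho : 'M[C]_(m * n)) : Prop :=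
  exists (N : nat) (p : 'I_N -> C) (rA : 'I_N -> 'M[C]_m) (rB : 'I_N -> 'M[C]_n),
    [/\ forall i, 0 <= p i, \sum_i p i = 1,
        forall i, is_state (rA i), forall i, is_state (rB i) &
        rho = \sum_i p i *: tensmx (rA i) (rB i)].

Definition GSICPOVM d (a : C) (M : 'I_(d ^ 2) -> 'M[C]_d) : Prop :=
  [/\ 1 / (d%:R ^+ 3) < a, a <= 1 / (d%:R ^+ 2),
      forall k, psd (M k) & \sum_k M k = 1%:M] /\
  [/\ forall k, \tr (M k) = 1 / d%:R,
      forall k, \tr (M k *m M k) = a &
      forall k l, k != l ->
        \tr (M k *m M l) = (1 - d%:R * a) / (d%:R * (d%:R ^+ 2 - 1))].

(* square root of a normal (in particular psd) matrix via the spectral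
   decomposition A = P^-1 diag(x) P: sqrt A = P^-1 diag(sqrt x) P *)
Definition sqrtmx n (A : 'M[C]_n) : 'M[C]_n :=
  invmx (spectralmx A) *m diag_mx (map_mx sqrtC (spectral_diag A)) *m spectralmx A.

Definition trnorm m n (G : 'M[C]_(m, n)) : C := \tr (sqrtmx (adjmx G *m G)).

Definition Jmx l : 'M[C]_l := const_mx 1.
Definition omega l n (X : 'cV[C]_n) : 'M[C]_(n, l) := \matrix_(i, j) X i 0.

Definition varsigma dA dB (MA : 'I_(dA ^ 2) -> 'M[C]_dA) (rho : 'M[C]_(dA * dB))
  : 'cV[C]_(dA ^ 2) := \col_al \tr (MA al *m ptraceB rho).
Definition zeta dA dB (MB : 'I_(dB ^ 2) -> 'M[C]_dB) (rho : 'M[C]_(dA * dB))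
  : 'cV[C]_(dB ^ 2) := \col_be \tr (MB be *m ptraceA rho).
Definition Gmx dA dB (MA : 'I_(dA ^ 2) -> 'M[C]_dA) (MB : 'I_(dB ^ 2) -> 'M[C]_dB)
  (rho : 'M[C]_(dA * dB)) : 'M[C]_(dA ^ 2, dB ^ 2) :=
  \matrix_(al, be) \tr (tensmx (MA al) (MB be) *m rho).

Definition Mlmunu l (mu nu : C) dA dB (MA : 'I_(dA ^ 2) -> 'M[C]_dA)
  (MB : 'I_(dB ^ 2) -> 'M[C]_dB) (rho : 'M[C]_(dA * dB))
  : 'M[C]_(l + dA ^ 2, l + dB ^ 2) :=
  block_mx ((mu * nu) *: Jmx l) (mu *: (omega l (zeta MB rho))^T)
           (nu *: omega l (varsigma MA rho)) (Gmx MA MB rho).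

End Defs.

(* Main.v *)
Require Import Defs.
From HB Require Import structures.
From mathcomp Require Import all_boot all_order all_algebra.
From mathcomp Require Import sesquilinear spectral.
From mathcomp Require Import ring.
Import Order.TTheory GRing.Theory Num.Theory Num.Def.
Local Open Scope ring_scope.
Set Implicit Arguments. Unset Strict Implicit.
Local Open Scope sesquilinear_scope.

Section G.
Variable C : numClosedFieldType.

Lemma CS_ord n (a b : 'I_n -> C) :
  `|\sum_i a i * b i| <= sqrtC (\sum_i `|a i| ^+ 2) * sqrtC (\sum_i `|b i| ^+ 2).
Proof.
pose u : 'rV[C]_n := \row_i a i.
pose v : 'rV[C]_n := \row_i (b i)^*.
have H : `|dotmx u v| <= sqrtC (dotmx u u) * sqrtC (dotmx v v) :=
  (@CauchySchwarz_sqrt C _ (@dotmx C n) u v).1.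
move: H; rewrite !dotmxE.
have e1 : forall (w : 'rV[C]_n), (w *m w ^t*) 0 0 = \sum_i `|w 0 i| ^+ 2.
  by move=> w; rewrite mxE; apply: eq_bigr => i _; rewrite !mxE normCK.
rewrite !e1 mxE.
have -> : \sum_j u 0 j * (v ^t*) j 0 = \sum_i a i * b i.
  by apply: eq_bigr => i _; rewrite !mxE conjCK.
congr (_ <= sqrtC _ * sqrtC _).
  by apply: eq_bigr => i _; rewrite !mxE.
by apply: eq_bigr => i _; rewrite !mxE norm_conjC.
Qed.

Lemma rnrm n (r : 'rV[C]_n) : (r *m r ^t*) 0 0 = \sum_k `|r 0 k| ^+ 2.
Proof. by rewrite mxE; apply: eq_bigr => i _; rewrite !mxE normCK. Qed.

Lemma cnrm n (c : 'cV[C]_n) : (c ^t* *m c) 0 0 = \sum_k `|c k 0| ^+ 2.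
Proof. by rewrite mxE; apply: eq_bigr => i _; rewrite !mxE normCK mulrC. Qed.

Lemma adjE m n (A : 'M[C]_(m, n)) : adjmx A = A ^t*.
Proof. by []. Qed.

Lemma unitary_inv n (P : 'M[C]_n) : P \is unitarymx -> P ^t* *m P = 1%:M.
Proof.
move=> Pu; rewrite -invmx_unitary //; apply: mulVmx; exact: unitarymx_unit.
Qed.

Lemma unitary_mul n (P : 'M[C]_n) : P \is unitarymx -> P *m P ^t* = 1%:M.
Proof. by move/unitarymxP. Qed.


Lemma adj_normal m n (X : 'M[C]_(m, n)) : (X ^t* *m X) \is normalmx.
Proof.
apply/normalmxP.
by rewrite !trmx_mul !map_mxM !trmxCK.
Qed.

Lemma trnorm_spec m n (X : 'M[C]_(m, n)) :
  let P := spectralmx (X ^t* *m X) in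
  let lam := spectral_diag (X ^t* *m X) in
  trnorm X = \sum_k sqrtC (lam 0 k) /\
  (X *m P ^t*) ^t* *m (X *m P ^t*) = diag_mx lam.
Proof.
move=> P lam.
have Pu : P \is unitarymx by apply: spectral_unitarymx.
have PU : P \in unitmx by apply: unitarymx_unit.
have /orthomx_spectralP HA := adj_normal X.
split.
  rewrite /trnorm /sqrtmx adjE -/P -/lam.
  by rewrite mxtrace_mulC mulmxA mulmxV // mul1mx mxtrace_diag; apply: eq_bigr => k _; rewrite mxE.
rewrite trmx_mul map_mxM trmxCK mulmxA -[P *m _ *m _]mulmxA.
rewrite -/P -/lam in HA.
rewrite [in X ^t* *m X]HA -invmx_unitary // !mulmxA mulmxV // mul1mx.
by rewrite -mulmxA mulmxV // mulmx1.
Qed.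


Lemma sq_facts (x : C) : 0 <= x ->
  let s := sqrtC x in
  [/\ s^-1 * x = s, s^-1 * s^-1 * x * s^-1 = s^-1, 0 <= s & (s^-1)^* = s^-1].
Proof.
move=> x0 s.
have s0 : 0 <= s by rewrite sqrtC_ge0.
have xs : x = s ^+ 2 by rewrite sqrtCK.
have cs : (s^-1)^* = s^-1 by rewrite fmorphV; congr (_^-1); apply/CrealP; rewrite ger0_real.
have [->|sn0] := eqVneq s 0.
  by rewrite invr0 !mul0r conjC0 lexx.
split => //; rewrite xs; field; exact: sn0.
Qed.

Lemma bessel n k (Z : 'M[C]_(n, k)) (U : 'cV[C]_n) :
  Z *m (Z ^t* *m Z) = Z ->
  \sum_j `|(Z ^t* *m U) j 0| ^+ 2 <= \sum_j `|U j 0| ^+ 2.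
Proof.
move=> HZ.
pose Q := 1%:M - Z *m Z ^t*.
have Qa : Q ^t* = Q.
  by rewrite /Q linearB /= map_mxB trmx1 map_mx1 trmx_mul map_mxM trmxCK.
have QQ : Q *m Q = Q.
  rewrite /Q mulmxBl !mulmxBr mul1mx mulmx1 -[Z *m _ *m (Z *m _)]mulmxA.
  rewrite [Z ^t* *m (Z *m _)]mulmxA mulmxA HZ mul1mx.
  by rewrite subrr subr0.
rewrite -!cnrm -subr_ge0.
have -> : (U ^t* *m U) 0 0 - ((Z ^t* *m U) ^t* *m (Z ^t* *m U)) 0 0
          = ((Q *m U) ^t* *m (Q *m U)) 0 0.
  rewrite [(Q *m U)^T]trmx_mul map_mxM Qa [in RHS]mulmxA -[_ *m Q *m Q]mulmxA QQ.
  rewrite [(Z ^t* *m U)^T]trmx_mul map_mxM trmxCK /Q mulmxBr mulmx1 mulmxBl !mulmxA.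
  by rewrite [RHS]mxE; congr (_ + _); rewrite [RHS]mxE.
rewrite cnrm; apply: sumr_ge0 => i _; exact: exprn_ge0.
Qed.


Lemma TN m n N (X : 'M[C]_(m, n)) (p : 'I_N -> C)
  (U : 'I_N -> 'cV[C]_m) (V : 'I_N -> 'rV[C]_n) :
  (forall i, 0 <= p i) -> X = \sum_i p i *: (U i *m V i) ->
  trnorm X <= \sum_i p i * (sqrtC (\sum_j `|U i j 0| ^+ 2) *
                            sqrtC (\sum_k `|V i 0 k| ^+ 2)).
Proof.
move=> p0 HX.
have [Htr HY] := trnorm_spec X.
set P := spectralmx _ in Htr HY.
set lam := spectral_diag _ in Htr HY.
have Pu : P \is unitarymx by apply: spectral_unitarymx.
set Y := X *m P ^t* in HY.
have lam0 : forall k, 0 <= lam 0 k.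
  move=> k; have /matrixP /(_ k k) := HY.
  rewrite [RHS]mxE eqxx mulr1n => <-.
  rewrite mxE; apply: sumr_ge0 => j _; rewrite !mxE mulrC -normCK; exact: exprn_ge0.
pose s k := sqrtC (lam 0 k).
pose t := \row_k (s k)^-1.
pose Z := Y *m diag_mx t.
have Zc : Z ^t* = diag_mx t *m Y ^t*.
  rewrite /Z trmx_mul map_mxM tr_diag_mx map_diag_mx; congr (diag_mx _ *m _).
  by apply/rowP => k; rewrite !mxE; have [_ _ _ H] := sq_facts (lam0 k); exact: H.
have HZ : Z *m (Z ^t* *m Z) = Z.
  rewrite Zc -!mulmxA [Y ^t* *m (Y *m _)]mulmxA HY /Z -!mulmxA !mulmx_diag.
  congr (_ *m (_ *m diag_mx _)); apply/rowP => k; rewrite !mxE.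
  by rewrite !mulrA; have [_ H _ _] := sq_facts (lam0 k); exact: H.
have Hs : trnorm X = \tr (Z ^t* *m Y).
  rewrite Htr Zc -mulmxA HY mulmx_diag mxtrace_diag; apply: eq_bigr => k _.
  by rewrite !mxE; have [H _ _ _] := sq_facts (lam0 k); rewrite H.
have trs : 0 <= trnorm X.
  by rewrite Htr; apply: sumr_ge0 => k _; rewrite sqrtC_ge0.
rewrite -(ger0_norm trs) Hs /Y HX mulmx_suml mulmx_sumr raddf_sum /=.
apply: le_trans (ler_norm_sum _ _ _) _; apply: ler_sum => i _.
rewrite -scalemxAl -scalemxAr mxtraceZ normrM (ger0_norm (p0 i)).
apply: ler_wpM2l; first exact: p0 i.
rewrite !mulmxA -mulmxA mxtrace_mulC trace_mx11 mxE.
apply: le_trans (CS_ord _ _) _.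
rewrite [X in _ <= X]mulrC.
have nn : forall (I : finType) (f : I -> C), 0 <= \sum_j `|f j| ^+ 2.
  by move=> I f; apply: sumr_ge0 => j _; exact: exprn_ge0.
apply: ler_pM; [by rewrite sqrtC_ge0 nn | by rewrite sqrtC_ge0 nn | |];
  rewrite ler_sqrtC ?nnegrE ?nn //.
- rewrite le_eqVlt; apply/orP; left; apply/eqP.
  rewrite -rnrm -(rnrm (V i)) -mulmxA; congr (_ 0 0).
  rewrite trmx_mul map_mxM trmxCK; congr (V i *m _).
  by rewrite mulmxA unitary_inv // mul1mx.
- exact: bessel.
Qed.


Lemma sum_mxvec m n (f : 'I_(m * n) -> C) :
  \sum_k f k = \sum_i \sum_j f (mxvec_index i j).
Proof.
rewrite pair_bigA /= (reindex (uncurry (@mxvec_index m n))) /=.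
  by apply: eq_bigr => -[i j] _.
exact: curry_mxvec_bij.
Qed.

Lemma frob n (Z R : 'M[C]_n) :
  `|\tr (Z *m R ^t*)| <= sqrtC (\tr (Z *m Z ^t*)) * sqrtC (\tr (R *m R ^t*))
  /\ 0 <= \tr (Z *m Z ^t*).
Proof.
have E : forall A B : 'M[C]_n, \tr (A *m B ^t*) =
    \sum_k mxvec A 0 k * (mxvec B 0 k)^*.
  move=> A B; rewrite sum_mxvec /mxtrace; apply: eq_bigr => i _.
  rewrite mxE; apply: eq_bigr => j _; rewrite !mxvecE !mxE //.
have E2 : forall A : 'M[C]_n, \tr (A *m A ^t*) = \sum_k `|mxvec A 0 k| ^+ 2.
  by move=> A; rewrite E; apply: eq_bigr => k _; rewrite normCK.
split; last by rewrite E2; apply: sumr_ge0 => k _; exact: exprn_ge0.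
rewrite E !E2; apply: le_trans (CS_ord _ _) _.
suff -> : \sum_i `|(mxvec R 0 i)^*| ^+ 2 = \sum_k `|mxvec R 0 k| ^+ 2 by [].
by apply: eq_bigr => k _; rewrite norm_conjC.
Qed.

Lemma tr_sumZr p n (A : 'M[C]_n) (f : 'I_p -> C) (B : 'I_p -> 'M[C]_n) :
  \tr (A *m \sum_i f i *: B i) = \sum_i f i * \tr (A *m B i).
Proof.
rewrite mulmx_sumr raddf_sum; apply: eq_bigr => i _.
by rewrite -scalemxAr; exact: mxtraceZ.
Qed.

Lemma tr_sumZl p n (A : 'M[C]_n) (f : 'I_p -> C) (B : 'I_p -> 'M[C]_n) :
  \tr ((\sum_i f i *: B i) *m A) = \sum_i f i * \tr (B i *m A).
Proof.
rewrite mulmx_suml raddf_sum; apply: eq_bigr => i _.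
by rewrite -scalemxAl; exact: mxtraceZ.
Qed.

Lemma conj_tr n (A : 'M[C]_n) : (\tr A)^* = \tr (A ^t*).
Proof. by rewrite rmorph_sum; apply: eq_bigr => i _; rewrite !mxE. Qed.

Lemma herm_tr_real n (A B : 'M[C]_n) : A ^t* = A -> B ^t* = B ->
  \tr (A *m B) \is Num.real.
Proof.
move=> hA hB; apply/CrealP.
by rewrite conj_tr trmx_mul map_mxM hA hB mxtrace_mulC.
Qed.


Lemma state_sq n (rho : 'M[C]_n) : is_state rho -> \tr (rho *m rho) <= 1.
Proof.
move=> [[hA hpsd] htr].
have hA' : rho ^t* = rho by [].
have Hn : rho \is normalmx by apply/normalmxP; rewrite hA'.
have /orthomx_spectralP HA := Hn.
set P := spectralmx rho in HA; set lam := spectral_diag rho in HA.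
have Pu : P \is unitarymx by apply: spectral_unitarymx.
have PU : P \in unitmx by apply: unitarymx_unit.
have HD : P *m rho *m P ^t* = diag_mx lam.
  rewrite {1}HA -invmx_unitary // !mulmxA mulmxV // mul1mx.
  by rewrite -mulmxA mulmxV // mulmx1.
have lam0 : forall k, 0 <= lam 0 k.
  move=> k; have /matrixP /(_ k k) := HD; rewrite [RHS]mxE eqxx mulr1n => <-.
  have := hpsd (row k P).
  suff -> : (row k P *m rho *m adjmx (row k P)) 0 0 = (P *m rho *m P ^t*) k k by [].
  rewrite !mxE; apply: eq_bigr => j _; rewrite !mxE; congr (_ * _).
  by apply: eq_bigr => l _; rewrite !mxE.
have trl : \sum_k lam 0 k = 1.
  rewrite -htr HA mxtrace_mulC mulmxA mulmxV // mul1mx mxtrace_diag //.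
have lam1 : forall k, lam 0 k <= 1.
  move=> k; rewrite -trl (bigD1 k) //= lerDl; apply: sumr_ge0 => j _; exact: lam0.
have -> : \tr (rho *m rho) = \sum_k lam 0 k ^+ 2.
  rewrite HA !mulmxA mulmxK // mxtrace_mulC !mulmxA mulmxV // mul1mx.
  rewrite mulmx_diag mxtrace_diag; apply: eq_bigr => k _; rewrite mxE expr2 //.
rewrite -[X in _ <= X]trl; apply: ler_sum => k _.
by rewrite expr2 ler_piMr // lam0.
Qed.


Lemma gsic_d d a (M : 'I_(d ^ 2) -> 'M[C]_d) : GSICPOVM a M -> (2 <= d)%N.
Proof.
move=> [[h1 h2 _ _] _]; case: d M h1 h2 => [|[|d]] M h1 h2 //.
  by move: (lt_le_trans h1 h2); rewrite !expr0n /= invr0 ltxx.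
by move: (lt_le_trans h1 h2); rewrite !expr1n ltxx.
Qed.


Lemma SIC d a (M : 'I_(d ^ 2) -> 'M[C]_d) (rho : 'M[C]_d) :
  GSICPOVM a M -> is_state rho ->
  \sum_al `|\tr (M al *m rho)| ^+ 2 <=
    (a * d%:R ^+ 2 + 1) / (d%:R * (d%:R + 1)).
Proof.
move=> HG Hst.
have d2 := gsic_d HG.
move: HG => [[ha1 ha2 Mpsd Msum] [Mtr Msq Moff]].
have trr := state_sq Hst.
move: Hst => [[rh_h rh_psd] rh_tr].
have rhA : rho ^t* = rho by [].
have MA : forall al, (M al) ^t* = M al by move=> al; case: (Mpsd al).
set dR := d%:R.
have d0 : dR != 0 by rewrite pnatr_eq0 -lt0n; apply: leq_trans (d2).
have dpos : 0 < dR by rewrite ltr0n; apply: leq_trans (d2).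
have d1 : dR - 1 != 0.
  by rewrite subr_eq0 pnatr_eq1; apply/eqP => e; rewrite e in d2.
have dd1 : dR + 1 != 0 by rewrite /dR natr1 pnatr_eq0.
have dd2 : dR ^+ 2 - 1 != 0.
  by rewrite -[1](expr1n _ 2) subr_sqr mulf_neq0 // -[1]/(1%:R) // ; rewrite expr1n.
pose b := (1 - dR * a) / (dR * (dR ^+ 2 - 1)).
pose c al := \tr (M al *m rho).
have creal : forall al, c al \is Num.real by move=> al; exact: herm_tr_real.
pose e := 1 / dR ^+ 2.
pose x al := c al - e.
have xreal : forall al, x al \is Num.real.
  by move=> al; rewrite /x rpredB // /e /dR rpredM ?rpred1 ?rpredV ?rpredX ?realn.
have sc : \sum_al c al = 1.
  by rewrite /c -raddf_sum /= -mulmx_suml Msum mul1mx.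
have sx : \sum_al x al = 0.
  rewrite /x sumrB sc sumr_const card_ord /e -mulr_natl natrX -/dR.
  by rewrite mul1r mulfV ?subrr // expf_neq0.
pose s := \sum_al x al ^+ 2.
pose Z := \sum_al x al *: M al.
pose R := rho - dR^-1 *: 1%:M.
have ZA : Z ^t* = Z.
  rewrite /Z; apply/matrixP => i j; rewrite !mxE !summxE rmorph_sum.
  apply: eq_bigr => al _; rewrite !mxE rmorphM /= (CrealP (xreal al)).
  by congr (_ * _); rewrite -[in RHS](MA al) !mxE.
have RA : R ^t* = R.
  rewrite /R; apply/matrixP => i j; rewrite !mxE rmorphB rmorphM rmorphMn /=.
  congr (_ - _ * _); first by rewrite -[in RHS]rhA !mxE.
    by apply/CrealP; rewrite rpredV realn.
  by rewrite rmorph1 eq_sym.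
have trZZ : \tr (Z *m Z) = (a - b) * s.
  rewrite {1}/Z tr_sumZl /s mulr_sumr; apply: eq_bigr => al _.
  rewrite /Z tr_sumZr (bigD1 al) //= Msq.
  have -> : \sum_(be | be != al) x be * \tr (M al *m M be) =
            \sum_(be | be != al) x be * b.
    by apply: eq_bigr => be hbe; rewrite Moff // eq_sym.
  rewrite -mulr_suml.
  have -> : \sum_(be | be != al) x be = - x al.
    by move: sx; rewrite (bigD1 al) //= => /eqP; rewrite addrC addr_eq0 => /eqP.
  by rewrite expr2; ring.
have trZR : \tr (Z *m R) = s.
  rewrite /Z tr_sumZl /s; apply: eq_bigr => al _.
  rewrite /R mulmxBr raddfB /= -scalemxAr mul_mx_scalar.
  rewrite [X in _ - X]mxtraceZ scale1r Mtr expr2; congr (_ * (_ - _)).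
  by rewrite /e; field.
have eqRR : \tr (R *m R) = \tr (rho *m rho) - dR^-1.
  rewrite /R mulmxBl !mulmxBr -!scalemxAl -!scalemxAr mul1mx mulmx1.
  rewrite !raddfB /= !mxtraceZ mulmx1 mxtrace1 rh_tr -/dR.
  by field.
have trRR : \tr (R *m R) <= 1 - dR^-1 by rewrite eqRR lerD2r.
have [frb ZZ0] := frob Z R.
have [_ RR0] := frob R R.
rewrite RA ZA trZR trZZ in frb ZZ0; rewrite RA in RR0.
have s0 : 0 <= s.
  by apply: sumr_ge0 => al _; rewrite -real_normK ?xreal // exprn_ge0.
have K0 : 0 <= 1 - dR^-1.
  by rewrite subr_ge0 invf_le1 // /dR ler1n; apply: leq_trans (d2).
have ab0 : 0 <= a - b.
  have -> : a - b = (a * dR ^+ 3 - 1) / (dR * (dR ^+ 2 - 1)).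
    by rewrite /b; field => //; rewrite -/dR dd2 d0.
  apply: divr_ge0.
    by rewrite subr_ge0 ltW // -ltr_pdivrMr ?exprn_gt0.
  apply: mulr_ge0; first exact: ltW.
  by rewrite subr_ge0 /dR -natrX ler1n expn_gt0; apply/orP; left; apply: leq_trans (d2).
have s2 : s ^+ 2 <= (a - b) * s * (1 - dR^-1).
  apply: le_trans (ler_wpM2l ZZ0 trRR).
  have h : s <= sqrtC ((a - b) * s) * sqrtC (\tr (R *m R)).
    by move: frb; rewrite ger0_norm.
  rewrite expr2; apply: le_trans (ler_pM s0 s0 h h) _.
  by rewrite mulrACA -!expr2 !sqrtCK.
have sle : s <= (a - b) * (1 - dR^-1).
  have [s00|sn0] := eqVneq s 0; first by rewrite s00 mulr_ge0.
  have sp : 0 < s by rewrite lt_def sn0 s0.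
  by rewrite -(ler_pM2l sp) -expr2 mulrA [s * _]mulrC.
have sumc : \sum_al `|\tr (M al *m rho)| ^+ 2 = s + e.
  rewrite /s.
  have -> : \sum_al `|\tr (M al *m rho)| ^+ 2 = \sum_al (x al + e) ^+ 2.
    by apply: eq_bigr => al _; rewrite real_normK ?creal // /x subrK.
  rewrite (eq_bigr (fun al => x al ^+ 2 + (e *+ 2 * x al + e ^+ 2))); last first.
    by move=> al _; rewrite sqrrD -addrA mulrnAl mulrC.
  rewrite big_split /= big_split /= -mulr_sumr sx mulr0 add0r sumr_const card_ord.
  by congr (_ + _); rewrite -mulr_natr natrX -/dR /e; field.
rewrite sumc.
have -> : (a * dR ^+ 2 + 1) / (dR * (dR + 1)) = (a - b) * (1 - dR^-1) + e.
  rewrite /b /e; field.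
  by rewrite -/dR d0 dd2 dd1.
by rewrite lerD2r.
Qed.


Lemma idxA_mx m n (i : 'I_m) (j : 'I_n) : idxA (mxvec_index i j) = i.
Proof. by rewrite /idxA /mxvec_index cast_ordK enum_rankK. Qed.

Lemma idxB_mx m n (i : 'I_m) (j : 'I_n) : idxB (mxvec_index i j) = j.
Proof. by rewrite /idxB /mxvec_index cast_ordK enum_rankK. Qed.

Lemma tr_tens m n (A C' : 'M[C]_m) (B D : 'M[C]_n) :
  \tr (tensmx A B *m tensmx C' D) = \tr (A *m C') * \tr (B *m D).
Proof.
rewrite /mxtrace sum_mxvec mulr_suml.
rewrite [RHS](eq_bigr (fun i => \sum_j (A *m C') i i * (B *m D) j j)); last first.
  by move=> i _; rewrite mulr_sumr.
apply: eq_bigr => i _; apply: eq_bigr => j _.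
rewrite mxE sum_mxvec [in RHS]mxE [(B *m D) j j]mxE mulr_suml.
apply: eq_bigr => i' _; rewrite mulr_sumr; apply: eq_bigr => j' _.
by rewrite !mxE !idxA_mx !idxB_mx; ring.
Qed.

Lemma ptB_tens m n (A : 'M[C]_m) (B : 'M[C]_n) :
  ptraceB (tensmx A B) = \tr B *: A.
Proof.
apply/matrixP => i j; rewrite !mxE /mxtrace mulr_suml.
by apply: eq_bigr => k _; rewrite !mxE !idxA_mx !idxB_mx mulrC.
Qed.

Lemma ptA_tens m n (A : 'M[C]_m) (B : 'M[C]_n) :
  ptraceA (tensmx A B) = \tr A *: B.
Proof.
apply/matrixP => i j; rewrite !mxE /mxtrace mulr_suml.
by apply: eq_bigr => k _; rewrite !mxE !idxA_mx !idxB_mx.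
Qed.

Lemma ptB_sum N m n (p : 'I_N -> C) (T : 'I_N -> 'M[C]_(m * n)) :
  ptraceB (\sum_i p i *: T i) = \sum_i p i *: ptraceB (T i).
Proof.
apply/matrixP => a b; rewrite !mxE summxE.
under eq_bigr do rewrite summxE.
rewrite exchange_big /=; apply: eq_bigr => i _.
by rewrite !mxE mulr_sumr; apply: eq_bigr => k _; rewrite !mxE.
Qed.

Lemma ptA_sum N m n (p : 'I_N -> C) (T : 'I_N -> 'M[C]_(m * n)) :
  ptraceA (\sum_i p i *: T i) = \sum_i p i *: ptraceA (T i).
Proof.
apply/matrixP => a b; rewrite !mxE summxE.
under eq_bigr do rewrite summxE.
rewrite exchange_big /=; apply: eq_bigr => i _.
by rewrite !mxE mulr_sumr; apply: eq_bigr => k _; rewrite !mxE.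
Qed.

End G.

Unset Implicit Arguments.
Set Strict Implicit.
Local Close Scope sesquilinear_scope.

Theorem corollary1 (C : numClosedFieldType) (dA dB : nat) (aA aB : C)
  (MA : 'I_(dA ^ 2) -> 'M[C]_dA) (MB : 'I_(dB ^ 2) -> 'M[C]_dB)
  (mu nu : C) (l : nat) (rho : 'M[C]_(dA * dB)) :
  GSICPOVM aA MA -> GSICPOVM aB MB ->
  mu \is Num.real -> nu \is Num.real -> (0 < l)%N ->
  is_state rho -> separable rho ->
  trnorm (Mlmunu l mu nu MA MB rho) <=
  sqrtC ((l%:R * mu ^+ 2 + (aA * dA%:R ^+ 2 + 1) / (dA%:R * (dA%:R + 1))) *
         (l%:R * nu ^+ 2 + (aB * dB%:R ^+ 2 + 1) / (dB%:R * (dB%:R + 1)))).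
Proof.
move=> HA HB mur nur l0 _ [N [p [rA [rB [p0 p1 sA sB rhoE]]]]].
set KA := (aA * dA%:R ^+ 2 + 1) / (dA%:R * (dA%:R + 1)).
set KB := (aB * dB%:R ^+ 2 + 1) / (dB%:R * (dB%:R + 1)).
pose cA i al := \tr (MA al *m rA i).
pose cB i be := \tr (MB be *m rB i).
pose U i : 'cV[C]_(l + dA ^ 2) := col_mx (const_mx mu) (\col_al cA i al).
pose V i : 'rV[C]_(l + dB ^ 2) := row_mx (const_mx nu) (\row_be cB i be).
have ptB : ptraceB rho = \sum_i p i *: rA i.
  rewrite rhoE ptB_sum; apply: eq_bigr => i _.
  by rewrite ptB_tens (sB i).2 scale1r.
have ptA : ptraceA rho = \sum_i p i *: rB i.
  rewrite rhoE ptA_sum; apply: eq_bigr => i _.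
  by rewrite ptA_tens (sA i).2 scale1r.
have vs : forall al, varsigma MA rho al 0 = \sum_i p i * cA i al.
  by move=> al; rewrite mxE ptB tr_sumZr.
have zt : forall be, zeta MB rho be 0 = \sum_i p i * cB i be.
  by move=> be; rewrite mxE ptA tr_sumZr.
have gm : forall al be, Gmx MA MB rho al be = \sum_i p i * (cA i al * cB i be).
  by move=> al be; rewrite mxE rhoE tr_sumZr; apply: eq_bigr => i _; rewrite tr_tens.
have ent : forall i j k, (p i *: (U i *m V i)) j k = p i * (U i j 0 * V i 0 k).
  by move=> i j k; rewrite mxE [(U i *m V i) j k]mxE big_ord1.
have HX : Mlmunu l mu nu MA MB rho = \sum_i p i *: (U i *m V i).
  apply/matrixP => j k; rewrite summxE.
  under eq_bigr do rewrite ent.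
  rewrite /Mlmunu.
  case: (split_ordP j) => j' ->; case: (split_ordP k) => k' ->.
  - rewrite block_mxEul !mxE mulr1 -[LHS]mul1r -p1 mulr_suml.
    by apply: eq_bigr => i _; rewrite col_mxEu row_mxEl !mxE.
  - rewrite block_mxEur !mxE ptA tr_sumZr mulr_sumr.
    by apply: eq_bigr => i _; rewrite col_mxEu row_mxEr !mxE mulrCA.
  - rewrite block_mxEdl !mxE ptB tr_sumZr mulr_sumr.
    by apply: eq_bigr => i _; rewrite col_mxEd row_mxEl !mxE mulrCA; congr (_ * _); exact: mulrC.
  - rewrite block_mxEdr gm.
    by apply: eq_bigr => i _; rewrite col_mxEd row_mxEr !mxE.
have nn : forall (I : finType) (f : I -> C), 0 <= \sum_j `|f j| ^+ 2.
  by move=> I f; apply: sumr_ge0 => j _; exact: exprn_ge0.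
have nU : forall i, \sum_j `|U i j 0| ^+ 2 <= l%:R * mu ^+ 2 + KA.
  move=> i; rewrite big_split_ord /=.
  under eq_bigr do rewrite col_mxEu mxE.
  under [X in _ + X <= _]eq_bigr do rewrite col_mxEd mxE.
  rewrite sumr_const card_ord real_normK // mulr_natl lerD2l.
  exact: (SIC HA (sA i)).
have nV : forall i, \sum_k `|V i 0 k| ^+ 2 <= l%:R * nu ^+ 2 + KB.
  move=> i; rewrite big_split_ord /=.
  under eq_bigr do rewrite row_mxEl mxE.
  under [X in _ + X <= _]eq_bigr do rewrite row_mxEr mxE.
  rewrite sumr_const card_ord real_normK // mulr_natl lerD2l.
  exact: (SIC HB (sB i)).
have Npos : (0 < N)%N.
  rewrite lt0n; apply/eqP => N0; move: p1; rewrite big1; last by move=> [i hi] _; exfalso; have := hi; rewrite N0.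
  by move/eqP; rewrite eq_sym oner_eq0.
pose i0 := Ordinal Npos.
have LA0 : 0 <= l%:R * mu ^+ 2 + KA by apply: le_trans (nU i0); exact: nn.
have LB0 : 0 <= l%:R * nu ^+ 2 + KB by apply: le_trans (nV i0); exact: nn.
rewrite sqrtCM ?nnegrE // HX.
apply: le_trans (TN p0 (erefl _)) _.
set T := sqrtC _ * sqrtC _.
rewrite -[T]mul1r -p1 mulr_suml; apply: ler_sum => i _.
apply: ler_wpM2l; first exact: p0.
by apply: ler_pM; rewrite ?sqrtC_ge0 ?nn // ler_sqrtC ?nnegrE ?nn.
Qed.
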